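(* Let $n\ge 3$ and let $\mathcal{A}$ be an arrangement of $(n-2)$-planes in $\mathbb{P}^n$ whose incidence graph $\Gamma(\mathcal{A})$ is isomorphic to the complete bipartite graph $K_{a,b}$, where $a,b$ are positive integers with $a\le b\le 2$ or $2\le a\le b$. Then $\mathcal{A}$ is a cone over an arrangement $\mathcal{B}$ of lines in $\mathbb{P}^3$ with $\Gamma(\mathcal{B})\cong K_{a,b}$; that is, there exist an $(n-4)$-dimensional linear subspace $V\subset\mathbb{P}^n$, a $3$-dimensional linear subspace $\Lambda\subset\mathbb{P}^n$ with $V\cap\Lambda=\emptyset$ (so $\Lambda\cong\mathbb{P}^3$), and an arrangement $\mathcal{B}$ of lines in $\Lambda$ with $\Gamma(\mathcal{B})\cong K_{a,b}$, such that $\mathcal{A}=\{\operatorname{span}(V\cup \ell) : \ell\in\mathcal{B}\}$.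
   Context: A subspace arrangement is a finite collection of linear subspaces of a projective space with no inclusions among distinct members. The incidence graph $\Gamma(\mathcal{A})$ has vertex set $\mathcal{A}$ and an edge between $X\ne Y$ iff $\dim(X\cap Y)$ exceeds the expected dimension, which for two $(n-2)$-planes in $\mathbb{P}^n$ is $n-4$ (the empty set has dimension $-1$; so for lines in $\mathbb{P}^3$ an edge means the two lines meet). $K_{a,b}$ is the complete bipartite graph with parts of sizes $a$ and $b$. For $n=3$, $V$ is empty. *)

(* Defs.v *)
(* projective subspaces of P^n over a field k are modelled as
   linear subspaces ({vspace _}) of k^(n+1) = 'rV[k]_(n.+1); a projective
   subspace of projective dimension d is a vspace of (vector) dimension d+1. *)
From HB Require Import structures.
From mathcomp Require Import all_boot all_order all_algebra.
Set Implicit Arguments. Unset Strict Implicit. Unset Printing Implicit Defensive.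
Import GRing.Theory.
Local Open Scope ring_scope.

Definition arrangement (k : fieldType) (vT : vectType k) (I : finType)
  (A : I -> {vspace vT}) : Prop :=
  forall i j : I, i != j -> ~~ (A i <= A j)%VS.

Definition Kab_edge (a b : nat) (i j : 'I_a + 'I_b) : bool :=
  match i, j with
  | inl _, inr _ => true
  | inr _, inl _ => true
  | _, _ => false
  end.

(* The incidence graph of A (indexed by the vertices of K_{a,b}) is K_{a,b}
   via this indexing: for distinct i, j, the (projective) dimension of
   A i ∩ A j exceeds the expected one iff i j is an edge of K_{a,b}.
   Here [e] is the expected dimension expressed as a VECTOR dimension bound:
   projective dim (\dim - 1) > expected projective dim (e - 1) iff \dim > e. *)
Definition incidence_is_Kab (k : fieldType) (vT : vectType k) (a b : nat)
  (e : nat) (A : 'I_a + 'I_b -> {vspace vT}) : Prop :=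
  forall i j : 'I_a + 'I_b, i != j ->
    ((e < \dim (A i :&: A j))%N <-> Kab_edge i j).

(* Main.v *)
Require Import Defs.
From HB Require Import structures.
From mathcomp Require Import all_boot all_order all_algebra.
From mathcomp Require Import zify.

Section Helpers.
Context {k : fieldType} {vT : vectType k}.

Lemma dim_le_full (U : {vspace vT}) : \dim U <= \dim {:vT}.
Proof. exact: dimvS (subvf U). Qed.

Lemma exists_sub (S : {vspace vT}) m : m <= \dim S -> exists V, \dim V = m /\ (V <= S)%VS.
Proof.
move=> hm; exists <<take m (vbasis S)>>%VS; split.
  have hf : free (take m (vbasis S)).
    apply: (catl_free (Y := drop m (vbasis S))); rewrite cat_take_drop.
    exact: basis_free (vbasisP S).
  rewrite (eqP hf) size_take size_tuple.
  by case: ltnP => // h; apply/eqP; rewrite eqn_leq hm h.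
apply/span_subvP => x /mem_take; exact: vbasis_mem.
Qed.

Lemma key n (A1 A2 X : {vspace vT}) : 3 <= n -> \dim {:vT} = n.+1 ->
  \dim A1 = n - 1 -> \dim A2 = n - 1 -> \dim X = n - 1 ->
  \dim (A1 :&: A2) <= n - 3 -> n - 3 < \dim (X :&: A1) ->
  n - 3 < \dim (X :&: A2) -> (A1 :&: A2 <= X)%VS.
Proof.
move=> n3 hN h1 h2 hX hW hx1 hx2.
have s1 := dimv_sum_cap A1 A2; have d1 := dim_le_full (A1 + A2).
have s2 := dimv_sum_cap (X :&: A1) (X :&: A2).
have d2 : \dim ((X :&: A1) + (X :&: A2)) <= \dim X.
  by apply: dimvS; rewrite subv_add !capvSl.
have d3 : \dim ((X :&: A1) :&: (X :&: A2)) <= \dim (X :&: (A1 :&: A2)).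
  apply: dimvS; apply/subvP => x; rewrite !memv_cap.
  by case/andP => /andP[-> ->] /andP[_ ->].
have : (X :&: (A1 :&: A2) == A1 :&: A2)%VS.
  by rewrite eqEdim capvSr /=; lia.
by move/eqP <-; exact: capvSl.
Qed.

Lemma full_sum (V X : {vspace vT}) : (V <= X)%VS -> (X + V^C = fullv)%VS.
Proof.
move=> hVX; apply/subv_anti/andP; split; first exact: subvf.
by rewrite -{1}(addv_complf V) addvS.
Qed.

Lemma cap_dim (V X : {vspace vT}) : (V <= X)%VS -> \dim (X :&: V^C) + \dim V = \dim X.
Proof.
move=> hVX; have := dimv_sum_cap X V^C; rewrite full_sum // dimv_compl.
have := dim_le_full V; lia.
Qed.

End Helpers.
Arguments cap_dim {k vT V X}.

Lemma cone (k : fieldType) (vT : vectType k) n a b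
  (A : 'I_a + 'I_b -> {vspace vT}) (V : {vspace vT}) :
  3 <= n -> \dim {:vT} = n.+1 -> (forall i, \dim (A i) = n - 1) ->
  arrangement A -> incidence_is_Kab (n - 3) A -> \dim V = n - 3 ->
  (forall i, V <= A i)%VS ->
  exists (V Lam : {vspace vT}) (B : 'I_a + 'I_b -> {vspace vT}),
    [/\ \dim V = (n - 3)%N, \dim Lam = 4%N & (V :&: Lam = 0)%VS] /\
    [/\ (forall j, \dim (B j) = 2%N /\ (B j <= Lam)%VS),
        arrangement B, incidence_is_Kab 0 B &
        (forall X, (exists i, X = A i) <-> (exists j, X = (V + B j)%VS))].
Proof.
move=> n3 hN hA arrA incA hV hVA.
pose B i := (A i :&: V^C)%VS.
have hB : forall i, \dim (B i) = 2.
  by move=> i; have := cap_dim (hVA i); rewrite hA hV /B; lia.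
have VB0 : forall i, \dim (V :&: B i) = 0.
  move=> i; have := dimvS (capvS (subvv V) (capvSr (A i) V^C)).
  by rewrite capv_compl dimv0 leqn0 => /eqP.
have AVB : forall i, A i = (V + B i)%VS.
  move=> i; apply/eqP; rewrite eq_sym eqEdim subv_add hVA capvSl /=.
  by have := dimv_sum_cap V (B i); rewrite hA hV hB VB0; lia.
exists V, (V^C)%VS, B; split.
  by split => //; [rewrite dimv_compl hN hV; lia | exact: capv_compl].
split.
- by move=> j; split => //; exact: capvSr.
- move=> i j ij; apply/negP => hij; move/negP: (arrA i j ij); apply.
  by rewrite (AVB i) (AVB j) addvS.
- move=> i j ij; have -> : (B i :&: B j = (A i :&: A j) :&: V^C)%VS.
    apply/vspaceP => x; rewrite !memv_cap.
    by case: (x \in A i); case: (x \in A j); case: (x \in (V^C)%VS).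
  have := cap_dim (V := V) (X := (A i :&: A j)%VS).
  rewrite subv_cap !hVA => /(_ isT) e.
  rewrite -(incA i j ij); rewrite hV in e; lia.
- move=> X; split; case=> i ->; exists i => //; exact: AVB.
Qed.

Local Open Scope ring_scope.

Theorem lemma2p2 (k : fieldType) (n a b : nat)
  (A : 'I_a + 'I_b -> {vspace 'rV[k]_(n.+1)}) :
  (3 <= n)%N ->
  (0 < a)%N -> (0 < b)%N ->
  ((a <= b <= 2)%N \/ (2 <= a <= b)%N) ->
  (forall i, \dim (A i) = (n - 1)%N) ->
  arrangement A ->
  incidence_is_Kab (n - 3) A ->
  exists (V Lam : {vspace 'rV[k]_(n.+1)})
         (B : 'I_a + 'I_b -> {vspace 'rV[k]_(n.+1)}),
    [/\ \dim V = (n - 3)%N, \dim Lam = 4%N & (V :&: Lam = 0)%VS] /\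
    [/\ (forall j, \dim (B j) = 2%N /\ (B j <= Lam)%VS),
        arrangement B, incidence_is_Kab 0 B &
        (forall X, (exists i, X = A i) <-> (exists j, X = (V + B j)%VS))].
Proof.
move=> n3 a0 b0 hab hA arrA incA.
have hN : \dim {:'rV[k]_(n.+1)} = n.+1 by rewrite dimvf; have -> := dim_matrix k 1 n.+1; rewrite GRing.mul1r.
suff [V [hV hVA]] : exists V : {vspace 'rV[k]_(n.+1)},
    \dim V = (n - 3)%N /\ forall i, (V <= A i)%VS.
  exact: cone n3 hN hA arrA incA hV hVA.
case: (ltnP 1 b) => hb.
  pose r0 : 'I_a + 'I_b := inr (Ordinal b0).
  pose r1 : 'I_a + 'I_b := inr (Ordinal hb).
  have r01 : r0 != r1 by [].
  have hW : (\dim (A r0 :&: A r1) <= n - 3)%N.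
    by rewrite leqNgt; apply/negP => /(incA r0 r1 r01).
  have hWd : \dim (A r0 :&: A r1) = (n - 3)%N.
    have := dimv_sum_cap (A r0) (A r1); have := dim_le_full (A r0 + A r1).
    rewrite !hA hN; lia.
  have hl : forall l, (A r0 :&: A r1 <= A (inl l))%VS.
    move=> l; apply: (@key _ _ n (A r0) (A r1) _ n3 hN) => //.
      by apply/(incA (inl l) r0 isT).
    by apply/(incA (inl l) r1 isT).
  exists (A r0 :&: A r1)%VS; split => //.
  case=> [l|j]; first exact: hl.
  case: (ltnP 1 a) => ha.
    pose l0 : 'I_a + 'I_b := inl (Ordinal a0).
    pose l1 : 'I_a + 'I_b := inl (Ordinal ha).
    have l01 : l0 != l1 by [].
    have hW' : (\dim (A l0 :&: A l1) <= n - 3)%N.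
      by rewrite leqNgt; apply/negP => /(incA l0 l1 l01).
    have hr : forall j, (A l0 :&: A l1 <= A (inr j))%VS.
      move=> j'; apply: (@key _ _ n (A l0) (A l1) _ n3 hN) => //.
        by apply/(incA (inr j') l0 isT).
      by apply/(incA (inr j') l1 isT).
    have sub : (A l0 :&: A l1 <= A r0 :&: A r1)%VS by rewrite subv_cap !hr.
    have : (A l0 :&: A l1 == A r0 :&: A r1)%VS.
      rewrite eqEdim sub /=.
      have := dimv_sum_cap (A l0) (A l1); have := dim_le_full (A l0 + A l1).
      rewrite !hA hN; lia.
    by move/eqP <-.
  have hb2 : (b <= 2)%N by case: hab => /andP[] //; lia.
  case: j => [[|[|j]] hj].
  - have -> : inr (Ordinal hj) = r0 by congr inr; apply: val_inj.
    exact: capvSl.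
  - have -> : inr (Ordinal hj) = r1 by congr inr; apply: val_inj.
    exact: capvSr.
  - lia.
have ha1 : (a <= 1)%N by case: hab => /andP[]; lia.
pose l0 : 'I_a + 'I_b := inl (Ordinal a0).
pose r0 : 'I_a + 'I_b := inr (Ordinal b0).
have hS : (n - 3 < \dim (A l0 :&: A r0))%N by apply/(incA l0 r0 isT).
have [V [hV hVS]] := exists_sub _ _ (ltnW hS).
exists V; split => //.
case=> [[[|l] hl]|[[|j] hj]]; try lia.
- have -> : inl (Ordinal hl) = l0 by congr inl; apply: val_inj.
  exact: subv_trans hVS (capvSl _ _).
- have -> : inr (Ordinal hj) = r0 by congr inr; apply: val_inj.
  exact: subv_trans hVS (capvSr _ _).
Qed.
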